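(* Let $T$ be an invertible operator in $\mathcal D(\mathcal P_n)$. Then $$K_H(T)=\max\{\varrho[T\phi_n],\varrho[T^{-1}\phi_n]\}=\max\bigl\{d_H(Z(\phi_n),Z(T\phi_n)),\,d_H(Z(T^{-1}\phi_n),Z(\phi_n))\bigr\}.$$
   Context: Let $n\ge 1$ be an integer and $\mathcal P_n$ the complex vector space of polynomials in one complex variable of degree at most $n$; $\phi_k(z)=z^k/k!$. $D$ is differentiation on $\mathcal P_n$, $I$ the identity, and $\mathcal D(\mathcal P_n)$ the linear span of $I,D,\dots,D^n$. For a nonzero $f$, $Z(f)$ is the multiset of roots of $f$ (with multiplicity; empty for nonzero constants); $Z(0)=\mathbb C$. For nonconstant $f$, $\varrho[f]=\max\{|u|:u\in Z(f)\}$. For finite nonempty $A,B\subset\mathbb C$, $d_h(A,B)=\max_{y\in B}\min_{x\in A}|x-y|$ and $d_H(A,B)=\max\{d_h(A,B),d_h(B,A)\}$, with conventions: for $d\in\{d_h,d_H\}$, $d(\emptyset,\emptyset)=0$, $d(A,\emptyset)=d(\emptyset,A)=+\infty$ for $A\ne\emptyset$, and $d(A,B)=0$ if one of $A,B$ equals $\mathbb C$ and the other is nonempty. $K_H(T)=\sup_{f\in\mathcal P_n}d_H(Z(f),Z(Tf))$. *)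

(* Defs.v *)
From HB Require Import structures.
From mathcomp Require Import all_boot all_order all_algebra.
From mathcomp Require Import complex.
From mathcomp Require Import boolp classical_sets reals constructive_ereal ereal.
Set Implicit Arguments. Unset Strict Implicit. Unset Printing Implicit Defensive.
Import Order.TTheory GRing.Theory Num.Theory.
Local Open Scope ring_scope.
Local Open Scope classical_set_scope.

Section Defs.
Variable R : realType.
Local Notation C := (R[i]).

Definition Pn (n : nat) : set {poly C} := [set f | (size f <= n.+1)%N].

Definition phi (k : nat) : {poly C} := (k`!%:R)^-1 *: 'X^k.

Definition Dop (n : nat) (c : 'I_n.+1 -> C) (f : {poly C}) : {poly C} :=
  \sum_(k < n.+1) c k *: f^`(k).

(* Z(f): root set (multiplicities are irrelevant for distances); Z(0) = C *)
Definition Z (f : {poly C}) : set C :=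
  if f == 0 then setT else [set z | root f z].

Definition rho (f : {poly C}) : \bar R :=
  ereal_sup [set (ComplexField.Normc.normc u)%:E | u in [set u | root f u]].

(* directed Hausdorff distance with the paper's conventions *)
Definition dh (A B : set C) : \bar R :=
  if `[< A = set0 >] then (if `[< B = set0 >] then 0%E else +oo%E)
  else if `[< B = set0 >] then +oo%E
  else if `[< A = setT >] || `[< B = setT >] then 0%E
  else ereal_sup [set ereal_inf [set (ComplexField.Normc.normc (x - y))%:E | x in A] | y in B].

Definition dH (A B : set C) : \bar R := Order.max (dh A B) (dh B A).

Definition KH (n : nat) (T : {poly C} -> {poly C}) : \bar R :=
  ereal_sup [set dH (Z f) (Z (T f)) | f in Pn n].

End Defs.

(* Main.v *)
Require Import Defs.
From HB Require Import structures.
From mathcomp Require Import all_boot all_order all_algebra.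
From mathcomp Require Import complex.
From mathcomp Require Import boolp classical_sets reals constructive_ereal ereal.
From mathcomp Require Import ring lra zify.
Import Order.TTheory GRing.Theory Num.Theory.
Local Open Scope ring_scope.
Local Open Scope classical_set_scope.
Set Implicit Arguments. Unset Strict Implicit. Unset Printing Implicit Defensive.

Section Core.
Variable R : realType.
Local Open Scope complex_scope.
Local Open Scope ring_scope.
Local Open Scope classical_set_scope.
Local Notation C := R[i].

Definition sq (x : C) : R := complex.Re x ^+ 2 + complex.Im x ^+ 2.

Lemma normcE (x : C) : ComplexField.Normc.normc x = Num.sqrt (sq x).
Proof. by case: x. Qed.

Lemma sq_ge0 (x : C) : 0 <= sq x.
Proof. by rewrite /sq addr_ge0 // sqr_ge0. Qed.

Lemma sqM (x y : C) : sq (x * y) = sq x * sq y.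
Proof. case: x => a b; case: y => c d; rewrite /sq /=. ring. Qed.

Lemma sqN (x : C) : sq (- x) = sq x.
Proof. case: x => a b; rewrite /sq /=; ring. Qed.

Lemma sq0 : sq 0 = 0.
Proof. by rewrite /sq /= expr0n /= addr0. Qed.

Lemma sq_eq0 (x : C) : (sq x == 0) = (x == 0).
Proof.
case: x => a b; rewrite /sq /= paddr_eq0 ?sqr_ge0 // !sqrf_eq0.
by apply/idP/idP => [/andP[/eqP-> /eqP->] //| /eqP [-> ->]]; rewrite !eqxx.
Qed.

Lemma ReD (x y : C) : complex.Re (x + y) = complex.Re x + complex.Re y.
Proof. by case: x; case: y. Qed.
Lemma ImD (x y : C) : complex.Im (x + y) = complex.Im x + complex.Im y.
Proof. by case: x; case: y. Qed.

Lemma Re_sum (T : Type) (s : seq T) (h : T -> C) :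
  complex.Re (\sum_(t <- s) h t) = \sum_(t <- s) complex.Re (h t).
Proof. elim: s => [|t s IH]; first by rewrite !big_nil. by rewrite !big_cons ReD IH. Qed.
Lemma Im_sum (T : Type) (s : seq T) (h : T -> C) :
  complex.Im (\sum_(t <- s) h t) = \sum_(t <- s) complex.Im (h t).
Proof. elim: s => [|t s IH]; first by rewrite !big_nil. by rewrite !big_cons ImD IH. Qed.

Lemma cs_real (T : Type) (s : seq T) (h : T -> R) :
  (\sum_(t <- s) h t) ^+ 2 <= (size s)%:R * \sum_(t <- s) h t ^+ 2.
Proof.
elim: s => [|t s IH]; first by rewrite !big_nil expr0n /= mul0r.
rewrite !big_cons /=.
have Y0 : 0 <= \sum_(t <- s) h t ^+ 2 by elim: (s) => [|x s0 IHs]; rewrite ?big_nil ?big_cons // addr_ge0 // sqr_ge0.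
move: IH Y0.
set X := \sum_(_ <- _) _; set Y := \sum_(_ <- _) _ ^+ 2.
set m := (size s)%:R => IH Y0.
have m0 : 0 <= m by rewrite ler0n.
rewrite mulrSr -/m.
have [me|mp] := eqVneq m 0.
  have X0 : X = 0.
    by apply/eqP; rewrite -sqrf_eq0 eq_le sqr_ge0 andbT; move: IH; rewrite me mul0r.
  rewrite X0 me; nra.
have mp' : 0 < m by rewrite lt_def mp.
set x := h t.
have H : 0 <= m * (m * x ^+ 2 - 2 * x * X + Y).
  have := sqr_ge0 (m * x - X); nra.
rewrite pmulr_rge0 // in H.
nra.
Qed.

Lemma cs_sq (s : seq C) :
  sq (\sum_(u <- s) u) <= (size s)%:R * \sum_(u <- s) sq u.
Proof.
rewrite /sq Re_sum Im_sum big_split /= mulrDr.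
by apply: lerD; apply: cs_real.
Qed.

Lemma F_expand (a u : C) (d : R) :
  sq (a * u - 1) - d * sq u = (sq a - d) * sq u - 2 * complex.Re (a * u) + 1.
Proof. case: a => a1 a2; case: u => u1 u2; rewrite /sq /=. ring. Qed.


Lemma sq_real (x : R) : sq x%:C = x ^+ 2.
Proof. by rewrite /sq /= expr0n /= addr0. Qed.

Lemma natC (n : nat) : (n%:R : C) = (n%:R : R)%:C.
Proof. by rewrite rmorph_nat. Qed.

Lemma Re_realM (x : R) (y : C) : complex.Re (x%:C * y) = x * complex.Re y.
Proof. case: y => a b /=; ring. Qed.

Lemma sumF (a : C) (d : R) (s : seq C) :
  \sum_(u <- s) (sq (a * u - 1) - d * sq u) =
  (sq a - d) * \sum_(u <- s) sq u - 2 * complex.Re (a * \sum_(u <- s) u) + (size s)%:R.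
Proof.
elim: s => [|u s IH].
  by rewrite !big_nil !mulr0 /=; ring.
rewrite !big_cons IH F_expand !mulrDr ReD /= mulrSr; ring.
Qed.

Lemma convex_contra (a ust : C) (us : seq C) (N : nat) (d : R) :
  (0 < N)%N -> (size us <= N)%N -> sq a <= d ->
  (forall u, u \in us -> d * sq u < sq (a * u - 1)) ->
  sq (a * ust - 1) <= d * sq ust ->
  \sum_(u <- us) u = N%:R * ust -> False.
Proof.
move=> N0 sN ad Hus Hust HS.
have n0 : (0 : R) < N%:R by rewrite ltr0n.
case: us sN Hus HS => [|u0 us'] sN Hus HS.
  have ust0 : ust = 0.
    move: HS; rewrite big_nil => /esym/eqP; rewrite mulf_eq0 pnatr_eq0.
    by case/orP => [/eqP N00|/eqP //]; rewrite N00 in N0.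
  by move: Hust; rewrite ust0 mulr0 add0r sqN sq0 mulr0 /sq /= expr1n expr0n /= addr0 ler10.
set us := u0 :: us' in sN Hus HS *.
have SF : 0 < \sum_(u <- us) (sq (a * u - 1) - d * sq u).
  rewrite big_cons; apply: ltr_pwDl; first by rewrite subr_gt0 Hus // mem_head.
  have : forall u, u \in us' -> d * sq u < sq (a * u - 1).
    by move=> u uin; apply: Hus; rewrite inE uin orbT.
  elim: (us') => [|v w IHw] Hw; first by rewrite big_nil.
  rewrite big_cons addr_ge0 //; first by rewrite subr_ge0 ltW // Hw // mem_head.
  by apply: IHw => u uin; apply: Hw; rewrite inE uin orbT.
rewrite sumF HS in SF.
have CS := cs_sq us; rewrite HS in CS.
rewrite natC sqM sq_real in CS.
rewrite natC mulrCA Re_realM in SF.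
have Hust' : (sq a - d) * sq ust - 2 * complex.Re (a * ust) + 1 <= 0.
  by rewrite -F_expand subr_le0.
set A := sq a - d in SF Hust'.
set Q := \sum_(u <- us) sq u in SF CS.
set p := sq ust in CS Hust'.
set l := complex.Re (a * ust) in SF Hust'.
set n := (N%:R : R) in n0 SF CS.
set m := ((size us)%:R : R) in SF CS.
have mn : m <= n by rewrite /m /n ler_nat.
have A0 : A <= 0 by rewrite /A subr_le0.
have Q0 : 0 <= Q.
  by rewrite /Q; elim: (us) => [|v w IHw]; rewrite ?big_nil ?big_cons // addr_ge0 // sq_ge0.
have h1 : 0 <= A * (n ^+ 2 * p - n * Q).
  apply: mulr_le0 => //; rewrite subr_le0; apply: le_trans CS _.
  by rewrite ler_wpM2r.
have h2 : 0 <= n * (n - m) by rewrite mulr_ge0 ?subr_ge0 // ltW.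
have h3 : 0 < n * (A * Q - 2 * (n * l) + m) by rewrite mulr_gt0.
have h4 : n ^+ 2 * (A * p - 2 * l + 1) <= 0.
  by rewrite mulr_ge0_le0 // sqr_ge0.
nra.
Qed.


Lemma logder (s : seq C) (v : C) : (forall z, z \in s -> v != z) ->
  (\prod_(z <- s) ('X - z%:P))^`().[v] =
  (\prod_(z <- s) ('X - z%:P)).[v] * \sum_(z <- s) (v - z)^-1.
Proof.
elim: s => [|z s IH] Hs.
  by rewrite !big_nil -polyC1 derivC hornerC horner0 mulr0.
have vz : v - z != 0 by rewrite subr_eq0 Hs // mem_head.
rewrite !big_cons derivM derivXsubC mul1r hornerD !hornerM IH; last first.
  by move=> y ys; apply: Hs; rewrite inE ys orbT.
rewrite hornerXsubC; field.
by [].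
Qed.

Lemma laguerre (N : nat) (f : {poly C}) (w : C) (d : R) (zeta v : C) :
  (0 < N)%N -> (size f <= N.+1)%N ->
  (forall al, root f al -> d < sq (al - w)) -> sq (zeta - w) <= d -> sq (v - w) <= d ->
  ~~ root (N%:R *: f - ('X - zeta%:P) * f^`()) v.
Proof.
move=> N0 sf Hf Hz Hv; apply/negP => rg.
have fv : f.[v] != 0.
  apply/negP => fv0; have := Hf v fv0; rewrite ltNge Hv //.
have f0 : f != 0 by apply: contraNneq fv => ->; rewrite horner0.
have lc0 : lead_coef f != 0 by rewrite lead_coef_eq0.
have [s fE] := closed_field_poly_normal f.
set P := \prod_(z <- s) ('X - z%:P) in fE.
have ss : (size s <= N)%N.
  by move: sf; rewrite fE size_scale // size_prod_XsubC.
have rootE' : forall z, root f z = (z \in s).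
  by move=> z; rewrite fE rootZ // root_prod_XsubC.
have Hs : forall z, z \in s -> v != z.
  move=> z zs; apply: contraNneq fv => ->.
  by have := rootE' z; rewrite /root => ->.
have fdv : f^`().[v] = f.[v] * \sum_(z <- s) (v - z)^-1.
  by rewrite fE derivZ !hornerZ logder // mulrA.
move: rg; rewrite /root hornerD hornerN hornerZ hornerM hornerXsubC fdv.
set S := \sum_(z <- s) _ => /eqP rg.
have eS : (v - zeta) * S = N%:R.
  move/eqP: rg; rewrite subr_eq0 => /eqP rg.
  by apply: (mulfI fv); rewrite [RHS]mulrC rg; ring.
have vz : v - zeta != 0.
  apply/negP => /eqP vz0; move: eS; rewrite vz0 mul0r => /esym/eqP.
  by rewrite pnatr_eq0 => /eqP N00; rewrite N00 in N0.
apply: (@convex_contra (v - w) (v - zeta)^-1 (map (fun z => (v - z)^-1) s) N d) => //.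
- by rewrite size_map.
- move=> u /mapP [z zs ->].
  have vz' : v - z != 0 by rewrite subr_eq0 Hs.
  have -> : (v - w) * (v - z)^-1 - 1 = (z - w) * (v - z)^-1 by field.
  rewrite sqM ltr_pM2r ?Hf ?rootE' //.
  by rewrite lt_def sq_ge0 sq_eq0 invr_eq0 vz' andbT.
- have -> : (v - w) * (v - zeta)^-1 - 1 = (zeta - w) * (v - zeta)^-1 by field.
  by rewrite sqM ler_wpM2r // sq_ge0.
- rewrite big_map -/S; apply: (mulfI vz); rewrite eS; field.
  by [].
Qed.


Definition Bf (N : nat) (Q f : {poly C}) (w : C) : C :=
  \sum_(j < N.+1) j`!%:R * Q`_j * (f^`(N - j)).[w].

Lemma hder (zeta : C) (f : {poly C}) (m : nat) :
  (('X - zeta%:P) * f^`())^`(m) = ('X - zeta%:P) * f^`(m.+1) + m%:R *: f^`(m).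
Proof.
elim: m => [|m IH]; first by rewrite derivn0 derivn1 scale0r addr0.
rewrite derivnS IH derivD derivM derivXsubC mul1r derivZ -!derivnS.
by rewrite mulrSr scalerDl scale1r -addrA addrC -addrA.
Qed.

Lemma gderw (N : nat) (f : {poly C}) (zeta w : C) (m : nat) :
  ((N%:R *: f - ('X - zeta%:P) * f^`())^`(m)).[w] =
  (N%:R - m%:R) * (f^`(m)).[w] - (w - zeta) * (f^`(m.+1)).[w].
Proof.
rewrite derivnB derivnZ hder !hornerE /=; ring.
Qed.

Lemma Bf_step (N : nat) (Q1 f : {poly C}) (w beta : C) :
  (size Q1 <= N.+1)%N ->
  Bf N.+1 (Q1 * ('X - beta%:P)) f w =
  Bf N Q1 (N.+1%:R *: f - ('X - (w - beta)%:P) * f^`()) w.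
Proof.
move=> sQ; rewrite /Bf.
under eq_bigr => j _ do rewrite mulrBr coefB coefMX coefMC mulrBr mulrBl.
rewrite sumrB big_ord_recl [X in _ - X]big_ord_recr /=.
have -> : Q1`_N.+1 = 0 by rewrite nth_default.
rewrite mul0r mulr0 mul0r mulr0 mul0r add0r addr0 -sumrB; apply: eq_bigr => i _.
rewrite gderw /bump /= add0n add1n.
have iN : (i <= N)%N by rewrite -ltnS ltn_ord.
have -> : (N.+1 - i.+1)%N = (N - i)%N by rewrite subSS.
have -> : (N.+1 - i)%N = (N - i).+1 by rewrite subSn.
have -> : (N.+1%:R - (N - i)%:R : C) = i.+1%:R.
  rewrite -natrB ?leq_subr; last by apply: leq_trans (leq_subr _ _) _.
  by have -> : (N.+1 - (N - i))%N = i.+1 by lia.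
rewrite factS natrM; ring.
Qed.


Lemma size_g (N : nat) (f : {poly C}) (zeta : C) :
  (size f <= N.+2)%N ->
  (size (N.+1%:R *: f - ('X - zeta%:P) * f^`())%R <= N.+1)%N.
Proof.
move=> sf; apply/leq_sizeP => j jN.
have fz : forall k, (N.+2 <= k)%N -> f`_k = 0.
  by move=> k kN; rewrite nth_default // (leq_trans sf).
rewrite coefB coefZ mulrBl coefB coefXM coefCM !coef_deriv.
have -> : f`_j.+1 = 0 by apply: fz; rewrite ltnS.
rewrite mul0rn mulr0 subr0.
case: j jN => [//|j] jN /=.
have [->|jlt] := eqVneq j N.
  by rewrite mulr_natl subrr.
have -> : f`_j.+1 = 0 by apply: fz; rewrite ltn_neqAle eq_sym jlt.
by rewrite mul0rn mulr0 subrr.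
Qed.

Lemma grace (N : nat) : forall (Q f : {poly C}) (w : C) (d : R),
  size Q = N.+1 -> (size f <= N.+1)%N ->
  (forall be, root Q be -> sq be <= d) ->
  (forall al, root f al -> d < sq (al - w)) -> 0 <= d -> Bf N Q f w != 0.
Proof.
elim: N => [|N IH] Q f w d sQ sf HQ Hf d0.
  rewrite /Bf big_ord1 /= mul1r mulf_neq0 //.
    have : lead_coef Q != 0 by rewrite lead_coef_eq0 -size_poly_eq0 sQ.
    by rewrite lead_coefE sQ.
  apply/negP => fw; have := Hf w fw; rewrite subrr sq0 ltNge d0 //.
have Q0 : Q != 0 by rewrite -size_poly_eq0 sQ.
have [be rQ] : exists be, root Q be by apply/closed_rootP; rewrite sQ.
have [Q1 QE] := factor_theorem _ _ rQ.
have Q10 : Q1 != 0 by apply: contraNneq Q0; rewrite QE => ->; rewrite mul0r.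
have sQ1 : size Q1 = N.+1.
  move: sQ; rewrite QE size_mul ?polyXsubC_eq0 // size_XsubC addn2 /=.
  by case.
rewrite QE Bf_step ?sQ1 //; apply: (IH _ _ _ d) => //.
- by apply: size_g.
- by move=> b rb; apply: HQ; rewrite QE rootM rb.
- move=> al ral; rewrite ltNge; apply/negP => Hal.
  have := @laguerre N.+1 f w d (w - be) al (ltn0Sn _) sf Hf.
  rewrite addrAC subrr add0r sqN => /(_ (HQ _ rQ) Hal).
  by rewrite ral.
Qed.

End Core.


Section Conn.
Variable R : realType.
Local Open Scope complex_scope.
Local Open Scope ring_scope.
Local Open Scope classical_set_scope.
Local Notation C := R[i].

Lemma coef_Dphi (n : nat) (c : 'I_n.+1 -> C) (j : nat) :
  (Dop c (phi R n))`_j =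
  \sum_(k < n.+1) c k * ((n`!%:R)^-1 * ((j == (n - k)%N)%:R *+ n ^_ k)).
Proof.
rewrite /Dop coef_sum; apply: eq_bigr => k _.
by rewrite coefZ /phi derivnZ coefZ derivnXn coefMn coefXn.
Qed.

Lemma Dop_Bf (n : nat) (c : 'I_n.+1 -> C) (f : {poly C}) (w : C) :
  (Dop c f).[w] = Bf n (Dop c (phi R n)) f w.
Proof.
have -> : (Dop c f).[w] = \sum_(k < n.+1) c k * (f^`(k)).[w].
  by rewrite /Dop horner_sum; apply: eq_bigr => k _; rewrite hornerZ.
rewrite /Bf; symmetry.
under eq_bigr => j _ do rewrite coef_Dphi mulr_sumr mulr_suml.
rewrite exchange_big /=; apply: eq_bigr => k _.
have kn : (k <= n)%N by rewrite -ltnS ltn_ord.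
have nk : (n - k < n.+1)%N by rewrite ltnS leq_subr.
rewrite (bigD1 (inord (n - k))) //= big1 ?addr0; last first.
  move=> i /negP ine; suff -> : (i == (n - k)%N :> nat) = false by rewrite mul0rn !mulr0 mul0r.
  apply/negP => /eqP ie; apply: ine; apply/eqP/val_inj => /=; rewrite inordK //.
rewrite inordK // eqxx subKn //.
have nf : (n`!%:R : C) != 0 by rewrite pnatr_eq0 -lt0n fact_gt0.
rewrite -(ffact_fact kn) natrM mulr1n.
field.
by rewrite !pnatr_eq0 -!lt0n fact_gt0 ffact_gt0 kn.
Qed.

Lemma PnP (n : nat) (f : {poly C}) : (f \in @Pn R n) <-> (size f <= n.+1)%N.
Proof. by split => [/set_mem|H]; [done|apply: mem_set]. Qed.

Lemma derivn_comp (h : {poly C}) (k m : nat) : h^`(k)^`(m) = h^`(k + m).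
Proof.
elim: m => [|m IH]; first by rewrite derivn0 addn0.
by rewrite derivnS IH addnS derivnS.
Qed.

Lemma Dop0 (n : nat) (c : 'I_n.+1 -> C) : Dop c 0 = 0.
Proof. by rewrite /Dop big1 // => k _; rewrite derivn_poly0 ?size_poly0 // scaler0. Qed.

Lemma Dop_sum (n m : nat) (c : 'I_n.+1 -> C) (a : 'I_m -> C) (F : 'I_m -> {poly C}) :
  Dop c (\sum_(i < m) a i *: F i) = \sum_(i < m) a i *: Dop c (F i).
Proof.
rewrite /Dop.
under eq_bigr => k _ do rewrite linear_sum scaler_sumr.
rewrite exchange_big /=; apply: eq_bigr => i _.
rewrite scaler_sumr; apply: eq_bigr => k _.
by rewrite linearZ /= !scalerA mulrC.
Qed.

Lemma Dop_scale (n : nat) (c : 'I_n.+1 -> C) (a : C) (h : {poly C}) :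
  Dop c (a *: h) = a *: Dop c h.
Proof.
rewrite /Dop scaler_sumr; apply: eq_bigr => k _.
by rewrite linearZ /= !scalerA mulrC.
Qed.

Lemma Dop_deriv (n : nat) (c : 'I_n.+1 -> C) (h : {poly C}) (m : nat) :
  Dop c (h^`(m)) = (Dop c h)^`(m).
Proof.
rewrite /Dop linear_sum; apply: eq_bigr => k _.
by rewrite linearZ /= !derivn_comp addnC.
Qed.

Lemma size_Dop (n : nat) (c : 'I_n.+1 -> C) (h : {poly C}) :
  (size (Dop c h) <= size h)%N.
Proof.
apply/leq_sizeP => j jh; rewrite /Dop coef_sum big1 // => k _.
rewrite coefZ coef_derivn nth_default ?mul0rn ?mulr0 //.
by apply: leq_trans jh _; rewrite leq_addl.
Qed.


Lemma size_phi (n : nat) : size (phi R n) = n.+1.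
Proof.
by rewrite /phi size_scale ?size_polyXn // invr_eq0 pnatr_eq0 -lt0n fact_gt0.
Qed.

Lemma phi_deriv (n m : nat) : (m <= n)%N ->
  (phi R n)^`(n - m) = ((n`!%:R)^-1 * (n ^_ (n - m))%:R) *: 'X^m.
Proof.
by move=> mn; rewrite /phi derivnZ derivnXn subKn // -scalerA scaler_nat.
Qed.

Section Inverse.
Variables (n : nat) (c : 'I_n.+1 -> C) (Tinv : {poly C} -> {poly C}).
Hypothesis H1 : forall f, f \in @Pn R n -> Tinv f \in @Pn R n.
Hypothesis H2 : forall f, f \in @Pn R n -> Tinv (Dop c f) = f.
Hypothesis H3 : forall f, f \in @Pn R n -> Dop c (Tinv f) = f.

Definition pinv := Tinv (phi R n).
Definition cp (k : 'I_n.+1) : C := ((n - k)`!%:R) * pinv`_(n - k).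

Lemma phi_Pn : phi R n \in @Pn R n.
Proof. by apply/PnP; rewrite size_phi. Qed.

Lemma size_pinv : (size pinv <= n.+1)%N.
Proof. by apply/PnP/H1/phi_Pn. Qed.

Lemma Dcp_phi : Dop cp (phi R n) = pinv.
Proof.
apply/polyP => j; rewrite coef_Dphi.
have nf : (n`!%:R : C) != 0 by rewrite pnatr_eq0 -lt0n fact_gt0.
have [jn|nj] := leqP j n; last first.
  rewrite [RHS]nth_default; last by apply: leq_trans size_pinv _.
  rewrite big1 // => k _.
  have -> : (j == (n - k)%N) = false.
    apply/negP => /eqP jE; move: nj; rewrite jE ltnNge leq_subr //.
  by rewrite mul0rn !mulr0.
have nj : (n - j < n.+1)%N by rewrite ltnS leq_subr.
rewrite (bigD1 (inord (n - j))) //= big1 ?addr0; last first.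
  move=> k /negP kne; suff -> : (j == (n - k)%N :> nat) = false by rewrite mul0rn !mulr0.
  apply/negP => /eqP je; apply: kne; apply/eqP/val_inj => /=; rewrite inordK //.
  have kn : (k <= n)%N by rewrite -ltnS ltn_ord.
  by rewrite je subKn.
rewrite inordK // subKn // eqxx /cp inordK // subKn //.
have e : (j`! * n ^_ (n - j))%N = n`!.
  by rewrite mulnC -{2}(subKn jn) ffact_fact ?leq_subr.
have e' : (j`!%:R : C) * (n ^_ (n - j))%:R = n`!%:R by rewrite -natrM e.
rewrite mulr1n.
transitivity (pinv`_j * ((j`!%:R * (n ^_ (n - j))%:R) / n`!%:R)); first by ring.
by rewrite e' divff // mulr1.
Qed.

Lemma inv_X (m : nat) : (m <= n)%N -> Dop c (Dop cp 'X^m) = 'X^m.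
Proof.
move=> mn.
have E : Dop c (Dop cp (phi R n)) = phi R n by rewrite Dcp_phi H3 // phi_Pn.
have := congr1 (derivn (n - m)) E.
rewrite -!Dop_deriv phi_deriv // !Dop_scale.
apply: scalerI.
rewrite mulf_neq0 // ?invr_eq0 ?pnatr_eq0 -?lt0n ?fact_gt0 ?ffact_gt0 ?leq_subr //.
Qed.

Lemma inv_Pn (g : {poly C}) : (size g <= n.+1)%N -> Dop c (Dop cp g) = g.
Proof.
move=> sg.
have gE : g = \sum_(i < n.+1) g`_i *: 'X^i.
  rewrite -poly_def; apply/polyP => i; rewrite coef_poly.
  by case: ltnP => // H; rewrite nth_default // (leq_trans sg H).
rewrite gE (Dop_sum cp) (Dop_sum c); apply: eq_bigr => i _.
by rewrite inv_X // -ltnS ltn_ord.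
Qed.

Lemma Tinv_Dop (g : {poly C}) : g \in @Pn R n -> Tinv g = Dop cp g.
Proof.
move=> gP; have sg := gP; move/PnP: sg => sg.
rewrite -{1}(inv_Pn sg) H2 //; apply/PnP.
by apply: leq_trans (size_Dop _ _) _.
Qed.

Lemma size_Dphi : size (Dop c (phi R n)) = n.+1.
Proof.
apply/eqP; rewrite eqn_leq; apply/andP; split.
  by apply: leq_trans (size_Dop _ _) _; rewrite size_phi.
have P1 : Dop c (phi R n) \in @Pn R n.
  by apply/PnP; apply: leq_trans (size_Dop _ _) _; rewrite size_phi.
have := H2 phi_Pn; rewrite Tinv_Dop // => E.
by rewrite -{1}(size_phi n) -{1}E size_Dop.
Qed.

Lemma size_pinv_eq : size (Dop cp (phi R n)) = n.+1.
Proof.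
rewrite Dcp_phi; apply/eqP; rewrite eqn_leq size_pinv /=.
have := H3 phi_Pn; rewrite -/pinv => E.
by rewrite -{1}(size_phi n) -E size_Dop.
Qed.

End Inverse.

End Conn.


Section Sets.
Variable R : realType.
Local Open Scope complex_scope.
Local Open Scope ring_scope.
Local Open Scope classical_set_scope.
Local Notation C := R[i].
Local Notation nc := (@ComplexField.Normc.normc R).

Lemma nc_ge0 (x : C) : 0 <= nc x.
Proof. by rewrite normcE sqrtr_ge0. Qed.

Lemma nc_le_sq (x : C) (r : R) : 0 <= r -> nc x <= r -> sq x <= r ^+ 2.
Proof.
move=> r0 H; rewrite -(sqr_sqrtr (sq_ge0 x)) -normcE.
by rewrite ler_pXn2r // nnegrE ?nc_ge0.
Qed.

Lemma sq_lt_nc (x : C) (r : R) : 0 <= r -> r ^+ 2 < sq x -> r < nc x.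
Proof.
move=> r0 H; move: H; rewrite -(sqr_sqrtr (sq_ge0 x)) -normcE.
by rewrite ltr_pXn2r // nnegrE ?nc_ge0.
Qed.

Lemma ncN (x : C) : nc (- x) = nc x.
Proof. by rewrite !normcE sqN. Qed.

Lemma nc0 : nc 0 = 0.
Proof. by rewrite normcE sq0 sqrtr0. Qed.

Lemma nc_real (x : R) : nc x%:C = `|x|.
Proof. by rewrite normcE sq_real sqrtr_sqr. Qed.

Lemma grace_Dop (n : nat) (c : 'I_n.+1 -> C) (f : {poly C}) (w : C) (r : R) :
  size (Dop c (phi R n)) = n.+1 -> (size f <= n.+1)%N -> 0 <= r ->
  (forall be, root (Dop c (phi R n)) be -> nc be <= r) ->
  root (Dop c f) w -> exists al, root f al /\ nc (al - w) <= r.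
Proof.
move=> sQ sf r0 HQ rw.
apply: contrapT => Hn.
have Hf : forall al, root f al -> r ^+ 2 < sq (al - w).
  move=> al ral; rewrite ltNge; apply/negP => Hal; apply: Hn; exists al; split => //.
  by rewrite normcE -(ger0_norm r0) -sqrtr_sqr ler_sqrt ?sqr_ge0.
have HQ' : forall be, root (Dop c (phi R n)) be -> sq be <= r ^+ 2.
  by move=> be rb; apply: nc_le_sq => //; apply: HQ.
have Hg := @grace R n (Dop c (phi R n)) f w (r ^+ 2) sQ sf HQ' Hf (sqr_ge0 r).
by rewrite -Dop_Bf (eqP rw) eqxx in Hg.
Qed.

Lemma argmax (s : seq C) (h : C -> R) : s != [::] ->
  exists2 x0, x0 \in s & forall x, x \in s -> h x <= h x0.
Proof.
elim: s => [//|a s IH] _.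
have [->|sn] := eqVneq s [::].
  by exists a; rewrite ?mem_head // => x; rewrite inE => /eqP ->.
have [x0 x0s Hx0] := IH sn.
have [ha|ha] := leP (h x0) (h a).
  exists a; first by rewrite mem_head.
  by move=> x; rewrite inE => /orP[/eqP ->//|/Hx0 /le_trans]; apply.
exists x0; first by rewrite inE x0s orbT.
by move=> x; rewrite inE => /orP[/eqP ->|/Hx0 //]; apply: ltW.
Qed.

Lemma rho_max (n : nat) (Q : {poly C}) : (1 <= n)%N -> size Q = n.+1 ->
  exists be0, [/\ root Q be0, forall be, root Q be -> nc be <= nc be0 &
    rho Q = (nc be0)%:E].
Proof.
move=> n1 sQ.
have Q0 : Q != 0 by rewrite -size_poly_eq0 sQ.
have [s QE] := closed_field_poly_normal Q.
have lc0 : lead_coef Q != 0 by rewrite lead_coef_eq0.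
have rE : forall z, root Q z = (z \in s).
  by move=> z; rewrite QE rootZ // root_prod_XsubC.
have sn : s != [::].
  apply/negP => /eqP s0; move: sQ; rewrite QE s0 big_nil size_scale // size_poly1.
  by case: n n1.
have [be0 bs Hb] := argmax nc sn.
exists be0; split; first by rewrite rE.
  by move=> be; rewrite rE; apply: Hb.
apply/eqP; rewrite eq_le; apply/andP; split.
  by apply: ge_ereal_sup => _ [u /= ru <-]; rewrite lee_fin Hb // -rE.
by apply: ereal_sup_ubound; exists be0 => //=; rewrite rE.
Qed.

Lemma dh_le (A B : set C) (M : \bar R) : (0 <= M)%E ->
  (A = set0 -> B = set0) -> (B = set0 -> A = set0) ->
  (forall y, B y -> exists x, A x /\ ((nc (x - y))%:E <= M)%E) ->
  (dh A B <= M)%E.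
Proof.
move=> M0 AB BA H; rewrite /dh.
have [A0|A0] := pselect (A = set0).
  by rewrite (asboolT A0) (asboolT (AB A0)).
have B0 : B <> set0 by move=> B0; apply: A0; apply: BA.
rewrite (asboolF A0) (asboolF B0).
case: ifP => _ //.
apply: ge_ereal_sup => _ [y By <-].
have [x [Ax Hx]] := H y By.
by apply: ge_ereal_inf; exists (nc (x - y))%:E => //; exists x.
Qed.

Lemma set0_neqT : [set (0 : C)] <> setT.
Proof.
move=> E; have : [set (0 : C)] 1 by rewrite E.
by move=> /= /eqP; rewrite oner_eq0.
Qed.

Lemma dh0_ge (B : set C) (y : C) : B y -> B <> setT ->
  ((nc y)%:E <= dh [set (0 : C)%R] B)%E.
Proof.
move=> By BT; rewrite /dh.
have B0 : B <> set0 by move=> B0; rewrite B0 in By.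
have S0 : [set (0 : C)] <> set0 by move=> E; have : [set (0 : C)] 0 by []; rewrite E.
rewrite (asboolF S0) (asboolF B0) (asboolF set0_neqT) (asboolF BT) /=.
apply: le_ereal_sup_tmp; exists ((nc y)%:E) => //.
exists y => //; rewrite image_set1 ereal_inf1 sub0r ncN //.
Qed.


Lemma ZQ (Q : {poly C}) : Q != 0 -> Z Q = [set z | root Q z].
Proof. by move=> Q0; rewrite /Z (negbTE Q0). Qed.

Lemma Zphi (n : nat) : (1 <= n)%N -> Z (phi R n) = [set (0 : C)%R].
Proof.
move=> n1.
have nf : ((n`!%:R)^-1 : C) != 0 by rewrite invr_eq0 pnatr_eq0 -lt0n fact_gt0.
have p0 : phi R n != 0 by rewrite -size_poly_eq0 size_phi.
rewrite ZQ //; apply/seteqP; split => z /=.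
  by rewrite /phi rootZ // /root hornerXn expf_eq0 => /andP[_ /eqP].
by move=> ->; rewrite /phi rootZ // /root hornerXn expf_eq0 eqxx andbT; case: n n1 {nf p0}.
Qed.

Lemma ZnotT (Q : {poly C}) (r : R) : Q != 0 -> 0 <= r ->
  (forall be, root Q be -> nc be <= r) -> Z Q <> setT.
Proof.
move=> Q0 r0 Hb; rewrite ZQ // => E.
have : [set z | root Q z] (r + 1)%:C by rewrite E.
move=> /Hb; rewrite nc_real ger0_norm ?addr_ge0 //.
move=> H; have : r + 1 <= r + 0 by rewrite addr0. by rewrite lerD2l ler10.
Qed.

Lemma dH0 (Q : {poly C}) (be0 : C) : Q != 0 -> root Q be0 ->
  (forall be, root Q be -> nc be <= nc be0) ->
  dH [set (0 : C)%R] (Z Q) = (nc be0)%:E.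
Proof.
move=> Q0 rb Hb.
have ZT := ZnotT Q0 (nc_ge0 be0) Hb.
have S0 : [set (0 : C)%R] <> set0 by move=> E; have : [set (0 : C)%R] 0 by []; rewrite E.
have ZQ0 : Z Q <> set0 by rewrite ZQ // => E; have : [set z | root Q z] be0 by []; rewrite E.
have h1 : (dh [set (0 : C)%R] (Z Q) <= (nc be0)%:E)%E.
  apply: dh_le; first by rewrite lee_fin nc_ge0.
  - by move=> /S0.
  - by move=> /ZQ0.
  move=> y; rewrite ZQ // => /= ry; exists 0; split => //.
  by rewrite sub0r ncN lee_fin Hb.
have h2 : (dh (Z Q) [set (0 : C)%R] <= (nc be0)%:E)%E.
  apply: dh_le; first by rewrite lee_fin nc_ge0.
  - by move=> /ZQ0.
  - by move=> /S0.
  move=> y /= ->.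
  by exists be0; split; [rewrite ZQ|rewrite subr0 lee_fin].
have h3 : ((nc be0)%:E <= dh [set (0 : C)%R] (Z Q))%E.
  by apply: dh0_ge => //; rewrite ZQ.
rewrite /dH; apply/eqP; rewrite eq_le ge_max h1 h2 /= le_max h3 //.
Qed.

End Sets.


Unset Implicit Arguments. Set Strict Implicit. Set Printing Implicit Defensive.

Theorem mainTheorem5 (R : realType) (n : nat) (c : 'I_n.+1 -> R[i])
    (Tinv : {poly R[i]} -> {poly R[i]}) :
  (1 <= n)%N ->
  (forall f, f \in @Pn R n -> Tinv f \in @Pn R n) ->
  (forall f, f \in @Pn R n -> Tinv (Dop c f) = f) ->
  (forall f, f \in @Pn R n -> Dop c (Tinv f) = f) ->
  KH n (Dop c) = Order.max (rho (Dop c (@phi R n))) (rho (Tinv (@phi R n))) /\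
  Order.max (rho (Dop c (@phi R n))) (rho (Tinv (@phi R n))) =
  Order.max (dH (Z (@phi R n)) (Z (Dop c (@phi R n)))) (dH (Z (Tinv (@phi R n))) (Z (@phi R n))).
Proof.
move=> n1 H1 H2 H3.
have sQ1 := size_Dphi H1 H2 H3.
have sQ2' := size_pinv_eq H1 H3.
have Q2E : Tinv (phi R n) = Dop (cp (n:=n) Tinv) (phi R n) by rewrite Dcp_phi.
have sQ2 : size (Tinv (phi R n)) = n.+1 by rewrite Q2E.
have [be1 [rb1 Hb1 rho1]] := rho_max n1 sQ1.
have [be2 [rb2 Hb2 rho2]] := rho_max n1 sQ2.
have Q10 : Dop c (phi R n) != 0 by rewrite -size_poly_eq0 sQ1.
have Q20 : Tinv (phi R n) != 0 by rewrite -size_poly_eq0 sQ2.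
have phiP : phi R n \in @Pn R n by apply/PnP; rewrite size_phi.
have P0 : (0 : {poly R[i]}) \in @Pn R n by apply/PnP; rewrite size_poly0.
have Tinv0 : Tinv 0 = 0 by rewrite -{1}(Dop0 c) H2.
set M := Order.max (rho (Dop c (phi R n))) (rho (Tinv (phi R n))).
have M1 : (rho (Dop c (phi R n)) <= M)%E by rewrite le_max lexx.
have M2 : (rho (Tinv (phi R n)) <= M)%E by rewrite le_max lexx orbT.
have M0 : (0 <= M)%E by apply: le_trans M1; rewrite rho1 lee_fin nc_ge0.
have dhphi1 : dH (Z (phi R n)) (Z (Dop c (phi R n))) = rho (Dop c (phi R n)).
  by rewrite Zphi // (dH0 Q10 rb1 Hb1); symmetry; exact: rho1.
have dhphi2 : dH (Z (Tinv (phi R n))) (Z (phi R n)) = rho (Tinv (phi R n)).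
  by rewrite /dH maxC -/(dH _ _) Zphi // (dH0 Q20 rb2 Hb2) rho2.
split; last by rewrite dhphi1 dhphi2.
apply/eqP; rewrite eq_le; apply/andP; split.
- apply: ge_ereal_sup => _ [f fP <-].
  have sf : (size f <= n.+1)%N := fP.
  move/mem_set: fP => fP.
  have TfP : Dop c f \in @Pn R n by apply/PnP; apply: leq_trans (size_Dop _ _) sf.
  have [->|f0] := eqVneq f 0.
    rewrite Dop0 /dH ge_max /Z eqxx.
    have H : (dh setT setT <= M)%E.
      apply: dh_le => // y _; exists y; split => //.
      by rewrite subrr nc0.
    by rewrite H.
  have Tf0 : Dop c f != 0.
    by apply: contraNneq f0 => E; rewrite -(H2 _ fP) E Tinv0.
  have E1 : forall y, root (Dop c f) y -> exists x, root f x /\ ComplexField.Normc.normc (x - y) <= ComplexField.Normc.normc be1.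
    by move=> y ry; apply: (grace_Dop sQ1 sf (nc_ge0 _)).
  have E2 : forall y, root f y -> exists x, root (Dop c f) x /\ ComplexField.Normc.normc (x - y) <= ComplexField.Normc.normc be2.
    move=> y ry; apply: (grace_Dop sQ2' (leq_trans (size_Dop _ _) sf) (nc_ge0 be2)).
      by move=> be; rewrite -Q2E; apply: Hb2.
    by rewrite -(Tinv_Dop H1 H2 H3 TfP) H2.
  rewrite !ZQ // /dH ge_max; apply/andP; split; apply: dh_le => //.
  + move=> A0; apply/seteqP; split => // y /= ry.
    have [x [rx _]] := E1 y ry.
    by have : [set z | root f z] x by []; rewrite A0.
  + move=> B0; apply/seteqP; split => // y /= ry.
    have [x [rx _]] := E2 y ry.
    by have : [set z | root (Dop c f) z] x by []; rewrite B0.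
  + move=> y /= ry; have [x [rx Hx]] := E1 y ry; exists x; split => //.
    by apply: le_trans M1; rewrite rho1 lee_fin.
  + move=> B0; apply/seteqP; split => // y /= ry.
    have [x [rx _]] := E2 y ry.
    by have : [set z | root (Dop c f) z] x by []; rewrite B0.
  + move=> A0; apply/seteqP; split => // y /= ry.
    have [x [rx _]] := E1 y ry.
    by have : [set z | root f z] x by []; rewrite A0.
  + move=> y /= ry; have [x [rx Hx]] := E2 y ry; exists x; split => //.
    by apply: le_trans M2; rewrite rho2 lee_fin.
- rewrite /M ge_max; apply/andP; split.
  + rewrite -dhphi1; apply: ereal_sup_ubound; exists (phi R n) => //.
    exact: set_mem phiP.
  + rewrite -dhphi2; apply: ereal_sup_ubound; exists (Tinv (phi R n)); first exact/set_mem/H1.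
    by rewrite H3.
Qed.
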